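(* Let $R$ be a reduced ring. Then the trivial extension $T(R,R)$ is almost Armendariz.
   Context: All rings are associative with identity. A ring is reduced if it has no nonzero nilpotent elements. For a ring $R$ and an $R$-bimodule $M$, the trivial extension $T(R,M)$ is $R\times M$ with componentwise addition and multiplication $(r_1,m_1)(r_2,m_2)=(r_1r_2, r_1m_2+m_1r_2)$; it is isomorphic to the ring of matrices $\begin{pmatrix} r& m\\ 0& r\end{pmatrix}$, $r\in R$, $m\in M$. For a ring $R$, $P(R)$ denotes the prime radical of $R$ (the intersection of all prime ideals of $R$, equivalently the set of strongly nilpotent elements of $R$). A ring $R$ is called almost Armendariz if whenever $f(x)=\sum_{i=0}^m a_ix^i$ and $g(x)=\sum_{j=0}^n b_jx^j\in R[x]$ satisfy $f(x)g(x)=0$, then $a_ib_j\in P(R)$ for all $0\le i\le m$, $0\le j\le n$. *)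

(* Defs.v *)
From HB Require Import structures.
From mathcomp Require Import all_boot all_order all_algebra.
Set Implicit Arguments. Unset Strict Implicit. Unset Printing Implicit Defensive.
Import GRing.Theory.
Local Open Scope ring_scope.

Definition reduced (R : nzRingType) : Prop :=
  forall (x : R) (n : nat), x ^+ n = 0 -> x = 0.

Definition two_sided_ideal (R : nzRingType) (I : R -> Prop) : Prop :=
  [/\ I 0,
      (forall x y, I x -> I y -> I (x - y)),
      (forall r x, I x -> I (r * x)) &
      (forall r x, I x -> I (x * r))].

Definition prime_ideal (R : nzRingType) (I : R -> Prop) : Prop :=
  [/\ two_sided_ideal I,
      ~ I 1 &
      (forall a b, (forall r, I (a * r * b)) -> I a \/ I b)].

Definition prime_radical (R : nzRingType) (x : R) : Prop :=
  forall I : R -> Prop, prime_ideal I -> I x.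

Definition almost_armendariz (R : nzRingType) : Prop :=
  forall f g : {poly R}, f * g = 0 ->
    forall i j : nat, (i < size f)%N -> (j < size g)%N ->
      prime_radical (f`_i * g`_j).

(** The trivial extension T(R,R) = R x R with
    (r1,m1)(r2,m2) = (r1 r2, r1 m2 + m1 r2). *)
Definition trivext (R : nzRingType) : Type := (R * R)%type.

Section TrivExt.
Variable R : nzRingType.

HB.instance Definition _ := GRing.Zmodule.copy (trivext R) (R * R)%type.

Definition te_one : trivext R := (1, 0).
Definition te_mul (x y : trivext R) : trivext R :=
  (x.1 * y.1, x.1 * y.2 + x.2 * y.1).

Lemma te_mulA : associative te_mul.
Proof.
move=> [a b] [c d] [e f]; rewrite /te_mul /=; congr pair; first by rewrite mulrA.
by rewrite mulrDr mulrDl !mulrA addrA.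
Qed.

Lemma te_mul1r : left_id te_one te_mul.
Proof. by move=> [a b]; rewrite /te_mul /= !mul1r mul0r addr0. Qed.

Lemma te_mulr1 : right_id te_one te_mul.
Proof. by move=> [a b]; rewrite /te_mul /= !mulr1 mulr0 add0r. Qed.

Lemma te_mulDl : left_distributive te_mul +%R.
Proof.
move=> [a b] [c d] [e f]; rewrite /te_mul /=; congr pair; first by rewrite mulrDl.
by rewrite !mulrDl addrACA.
Qed.

Lemma te_mulDr : right_distributive te_mul +%R.
Proof.
move=> [a b] [c d] [e f]; rewrite /te_mul /=; congr pair; first by rewrite mulrDr.
by rewrite !mulrDr addrACA.
Qed.

Lemma te_one_neq0 : te_one != 0.
Proof. by apply/eqP=> -[] /eqP; rewrite oner_eq0. Qed.

HB.instance Definition _ := GRing.Zmodule_isNzRing.Build (trivext R)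
  te_mulA te_mul1r te_mulr1 te_mulDl te_mulDr te_one_neq0.

Lemma trivext_mulE (x y : trivext R) : x * y = (x.1 * y.1, x.1 * y.2 + x.2 * y.1).
Proof. by []. Qed.

End TrivExt.

(* Main.v *)
Require Import Defs.
From HB Require Import structures.
From mathcomp Require Import all_boot all_order all_algebra.
From mathcomp Require Import zify.
Set Implicit Arguments. Unset Strict Implicit. Unset Printing Implicit Defensive.
Import GRing.Theory.
Local Open Scope ring_scope.

Lemma red_comm (R : nzRingType) : reduced R -> forall x y : R, x * y = 0 -> y * x = 0.
Proof.
move=> red x y H; apply: (red _ 2%N).
by rewrite expr2 mulrA -(mulrA y x y) H mulr0 mul0r.
Qed.

Lemma red_arm (R : nzRingType) (red : reduced R) (a b : nat -> R) :
  (forall n, \sum_(k < n.+1) a k * b (n - k)%N = 0) ->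
  forall i j, a i * b j = 0.
Proof.
move=> H; elim/ltn_ind=> i IHi; elim/ltn_ind=> j IHj.
have hi : (i < (i + j).+1)%N by rewrite ltnS leq_addr.
have E : (\sum_(k < (i + j).+1) a k * b (i + j - k)%N) * a i = a i * b j * a i.
  rewrite mulr_suml (bigD1 (Ordinal hi)) //= addKn big1 ?addr0 // => k Hk.
  case: (ltngtP k i) => Hki.
  - by rewrite IHi // mul0r.
  - have Hl : (i + j - k < j)%N.
      have := ltn_ord k; rewrite ltnS => Hk'.
      lia.
    by rewrite -mulrA (red_comm red (IHj _ Hl)) mulr0.
  - have Ek : k = Ordinal hi by apply: val_inj.
    by move: Hk; rewrite Ek eqxx.
move: E; rewrite H mul0r => E.
apply: (red _ 2%N); by rewrite expr2 mulrA -E mul0r.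
Qed.

Theorem corollary2p2 (R : nzRingType) :
  reduced R -> almost_armendariz (trivext R).
Proof.
move=> red f g fg i j _ _ I [[I0 Isub Il Ir] _ Ipr].
have fst_sum : forall n, ((f * g)`_n).1 = \sum_(k < n.+1) (f`_k).1 * (g`_(n - k)%N).1.
  move=> n; rewrite coefM.
  by rewrite (big_morph (fun x : trivext R => x.1) (id1 := 0) (op1 := +%R)).
have H0 := red_arm red (a := fun k => (f`_k).1) (b := fun k => (g`_k).1).
have Hz : (f`_i * g`_j).1 = 0.
  rewrite trivext_mulE /=; apply: H0 => n.
  by rewrite -fst_sum fg coef0.
set x := f`_i * g`_j in Hz *.
pose y : trivext R := (0, x.2).
have -> : x = y by rewrite /y -Hz -surjective_pairing.
have Hy : forall r : trivext R, I (y * r * y).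
  move=> r; suff -> : y * r * y = 0 by [].
  by rewrite !trivext_mulE /= !mul0r !mulr0 ?add0r ?addr0.
by case: (Ipr y y Hy).
Qed.
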